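(* Let $G$ be an $N$-cube Adinkra with heights disregarded (a valise $N$-cube Adinkra). Then $G$ is vertex-transitive up to the boson/fermion bipartition: for any two vertices $u,v$ that are both bosons or both fermions there is an automorphism of $G$ mapping $u$ to $v$.
   Context: An Adinkra of dimension $N$ is a finite connected simple graph $G=(V,E)$ together with: (1) a bipartition of $V$ into bosons and fermions such that every edge joins a boson and a fermion; (2) a height function (here disregarded); (3) a coloring of $E$ by colors $\{1,\dots,N\}$ such that each vertex is incident to exactly one edge of each color; (4) an edge parity $\pi:E\to\mathbb{Z}_2$ (parity $1$ = dashed). These must satisfy: every path with edge colors $(i,j)$, $i\neq j$, lies in a unique 4-cycle with colors $(i,j,i,j)$, and every such two-colored 4-cycle has an odd number of dashed edges. An $N$-cube Adinkra has $2^N$ vertices. Switching a vertex reverses the parity of all edges incident to it. An automorphism of $G$ is a permutation of $V$ preserving adjacency, edge colors and the bipartition, which becomes parity-preserving after switching some set of vertices. *)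

(* Defs.v *)
From mathcomp Require Import all_boot perm.
Set Implicit Arguments. Unset Strict Implicit. Unset Printing Implicit Defensive.

(* An (heightless / valise) Adinkra of dimension N on a finite vertex type V.
   - boson v : true for bosons, false for fermions (the bipartition);
   - adj : the adjacency relation of the simple graph (symmetric, irreflexive);
   - color u v : color of the edge {u,v} (only meaningful when adj u v);
   - parity u v : edge parity (true = dashed), only meaningful when adj u v. *)
Section Adinkra.
Variables (N : nat) (V : finType).
Variables (boson : V -> bool) (adj : rel V) (color : V -> V -> 'I_N)
          (parity : V -> V -> bool).

Definition simple_graph : Prop :=
  (forall u v, adj u v = adj v u) /\ (forall v, ~~ adj v v).

Definition connected_graph : Prop := forall u v, connect adj u v.

Definition bipartite_bf : Prop :=
  forall u v, adj u v -> boson u != boson v.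

Definition edge_labels_sym : Prop :=
  forall u v, adj u v -> color u v = color v u /\ parity u v = parity v u.

Definition proper_N_coloring : Prop :=
  forall v (i : 'I_N), #|[set w | adj v w & color v w == i]| = 1.

Definition two_color_squares : Prop :=
  forall u v w, adj u v -> adj v w -> color u v != color v w ->
    #|[set x | [&& adj w x, color w x == color u v,
                   adj x u & color x u == color v w]]| = 1.

Definition odd_dashing : Prop :=
  forall u v w x, adj u v -> adj v w -> adj w x -> adj x u ->
    color u v != color v w -> color w x = color u v -> color x u = color v w ->
    odd (parity u v + parity v w + parity w x + parity x u).

Definition is_adinkra : Prop :=
  simple_graph /\ connected_graph /\ bipartite_bf /\ edge_labels_sym /\
  proper_N_coloring /\ two_color_squares /\ odd_dashing.

(* An automorphism: a permutation of V preserving adjacency, edge colors and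
   the bipartition, which becomes parity-preserving after switching the
   vertices of some set S (switching reverses the parity of all edges
   incident to a switched vertex). *)
Definition is_automorphism (s : {perm V}) : Prop :=
  [/\ forall u v, adj (s u) (s v) = adj u v,
      forall u v, adj u v -> color (s u) (s v) = color u v,
      forall v, boson (s v) = boson v
    & exists S : {set V}, forall u v, adj u v ->
        parity (s u) (s v) = (parity u v (+) (u \in S)) (+) (v \in S)].
End Adinkra.

(* Main.v *)
Require Import Defs.
From mathcomp Require Import all_boot perm.
Set Implicit Arguments. Unset Strict Implicit. Unset Printing Implicit Defensive.

Section Proof.
Variables (N : nat) (V : finType).
Variables (boson : V -> bool) (adj : rel V) (color : V -> V -> 'I_N)
          (parity : V -> V -> bool).
Hypothesis Had : is_adinkra boson adj color parity.

Lemma adj_sym u v : adj u v = adj v u.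
Proof. by case: Had => [[H _] _]. Qed.

Lemma col_sym u v : adj u v -> color u v = color v u.
Proof. by case: Had => _ [_ [_ [H _]]] /H []. Qed.

Lemma par_sym u v : adj u v -> parity u v = parity v u.
Proof. by case: Had => _ [_ [_ [H _]]] /H []. Qed.

Definition sig (i : 'I_N) (v : V) : V :=
  odflt v [pick w | adj v w && (color v w == i)].

Lemma sigP i v : adj v (sig i v) /\ color v (sig i v) = i.
Proof.
rewrite /sig; case: pickP => [w /andP [a /eqP c] | H] //=.
case: Had => _ [_ [_ [_ [Hc _]]]].
have := Hc v i; move/eqP/cards1P => [x Hx].
have : x \in [set w | adj v w & color v w == i] by rewrite Hx inE.
by rewrite inE H.
Qed.

Lemma sig_uniq i v w : adj v w -> color v w = i -> w = sig i v.
Proof.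
move=> a c.
case: Had => _ [_ [_ [_ [Hc _]]]].
have := Hc v i; move/eqP/cards1P => [x Hx].
have [a2 c2] := sigP i v.
have h1 : w \in [set w | adj v w & color v w == i] by rewrite inE a c eqxx.
have h2 : sig i v \in [set w | adj v w & color v w == i] by rewrite inE a2 c2 eqxx.
rewrite Hx in_set1 in h1; rewrite Hx in_set1 in h2; by rewrite (eqP h1) (eqP h2).
Qed.

Lemma sigK i : involutive (sig i).
Proof.
move=> v; have [a c] := sigP i v.
apply/esym/sig_uniq; first by rewrite adj_sym.
by rewrite -(col_sym a).
Qed.

Lemma sig_inj i : injective (sig i).
Proof. exact: inv_inj (sigK i). Qed.

Lemma sig_adj u v : adj u v -> v = sig (color u v) u.
Proof. by move=> a; apply: sig_uniq. Qed.

Lemma sigC i j v : sig i (sig j v) = sig j (sig i v).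
Proof.
have [->|nij] := eqVneq i j; first by [].
case: Had => _ [_ [_ [_ [_ [Hsq _]]]]].
have [a1 c1] := sigP i v.
have [a2 c2] := sigP j (sig i v).
have := Hsq v (sig i v) (sig j (sig i v)) a1 a2.
rewrite c1 c2 => /(_ nij) /eqP /cards1P [x Hx].
have : x \in [set x | [&& adj (sig j (sig i v)) x, color (sig j (sig i v)) x == i,
                   adj x v & color x v == j]] by rewrite Hx inE.
rewrite inE => /and4P [b1 /eqP d1 b2 /eqP d2].
have e1 := sig_uniq b1 d1.
have e2 : x = sig j v.
  apply: sig_uniq; first by rewrite adj_sym.
  by rewrite -(col_sym b2).
by rewrite -e2 e1 sigK.
Qed.

Lemma sig_bos i v : boson (sig i v) = ~~ boson v.
Proof.
case: Had => _ [_ [Hb _]].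
have [a _] := sigP i v.
by have := Hb _ _ a; case: (boson v); case: (boson (sig i v)).
Qed.

Lemma sig_adjE k u v : adj (sig k u) (sig k v) = adj u v.
Proof.
have fw : forall u v, adj u v -> adj (sig k u) (sig k v).
  move=> x y a; rewrite (sig_adj a) sigC.
  by case: (sigP (color x y) (sig k x)).
apply/idP/idP; last exact: fw.
by move/fw; rewrite !sigK.
Qed.

Lemma sig_colE k u v : adj u v -> color (sig k u) (sig k v) = color u v.
Proof.
move=> a; rewrite {1}(sig_adj a) sigC.
by case: (sigP (color u v) (sig k u)).
Qed.

Definition F (s : seq 'I_N) (C : {set 'I_N}) (w : V) : V :=
  foldr (fun k w => if k \in C then sig k w else w) w s.

Lemma F_sig s C i w : sig i (F s C w) = F s C (sig i w).
Proof.
elim: s => [|k s IH] //=.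
by case: (k \in C) => //; rewrite sigC IH.
Qed.

Definition sdiff (A C : {set 'I_N}) := [set k | (k \in A) (+) (k \in C)].

Lemma F_notin s A i w : i \notin s -> F s (sdiff A [set i]) w = F s A w.
Proof.
elim: s => [|k s IH] //=; rewrite inE negb_or => /andP [ne ni].
rewrite IH // /sdiff !inE; rewrite eq_sym in ne; by rewrite (negbTE ne) addbF.
Qed.

Lemma F_flip s A i w : uniq s -> i \in s ->
  F s (sdiff A [set i]) w = sig i (F s A w).
Proof.
elim: s => [|k s IH] //= /andP [ks us]; rewrite inE.
have [e _|ne /= ins] := eqVneq i k.
  subst k; rewrite F_notin // /sdiff !inE eqxx.
  by case: (i \in A) => /=; rewrite ?sigK.
rewrite IH // /sdiff !inE; rewrite eq_sym in ne; rewrite (negbTE ne) addbF.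
by case: (k \in A) => //; rewrite sigC.
Qed.

Lemma F_inj s C : injective (F s C).
Proof.
elim: s => [|k s IH] //= x y /=; case: (k \in C) => H; apply: IH => //; exact: (sig_inj (i:=k) H).
Qed.

Lemma F_adjE s C u v : adj (F s C u) (F s C v) = adj u v.
Proof. by elim: s => [|k s IH] //=; case: (k \in C); rewrite ?sig_adjE. Qed.

Lemma F_colE s C u v : adj u v -> color (F s C u) (F s C v) = color u v.
Proof.
move=> a; elim: s => [|k s IH] //=; case: (k \in C) => //.
by rewrite sig_colE // F_adjE.
Qed.

Lemma F_bos s C w : boson (F s C w) = boson w (+) odd (count (fun k => k \in C) s).
Proof.
elim: s => [|k s IH] /=; first by rewrite addbF.
case: (k \in C) => /=; last by rewrite add0n.
by rewrite sig_bos IH; case: (boson w); case: (odd _).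
Qed.

Lemma F_set0 s w : F s set0 w = w.
Proof. by elim: s => [|k s IH] //=; rewrite inE. Qed.

Definition Phi (r : V) (A : {set 'I_N}) := F (enum 'I_N) A r.

Lemma Phi_sig r A i : sig i (Phi r A) = Phi r (sdiff A [set i]).
Proof. by rewrite /Phi F_flip ?enum_uniq ?mem_enum. Qed.

Lemma Phi_surj r w : exists A, Phi r A = w.
Proof.
case: Had => _ [Hconn _].
pose R := [pred w | [exists A, Phi r A == w]].
have cl : closed adj R.
  have h : forall x y, adj x y -> x \in R -> y \in R.
    move=> x y a; rewrite !inE => /existsP [A /eqP e].
    apply/existsP; exists (sdiff A [set color x y]).
    by rewrite -Phi_sig e -sig_adj.
  move=> x y a; apply/idP/idP; first exact: h.
  by apply: h; rewrite adj_sym.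
have := closed_connect cl (Hconn r w).
have -> : r \in R by apply/existsP; exists set0; rewrite /Phi F_set0.
by move/esym; rewrite inE => /existsP [A /eqP]; exists A.
Qed.

Hypothesis Hcard : #|V| = 2 ^ N.

Lemma Phi_inj r : injective (Phi r).
Proof.
have [g gK] : {g : V -> {set 'I_N} | cancel g (Phi r)}.
  exists (fun w => odflt set0 [pick A | Phi r A == w]).
  move=> w; case: pickP => [A /eqP //|H].
  by have [A e] := Phi_surj r w; have := H A; rewrite e eqxx.
have gi : injective g := can_inj gK.
have le : #|{set 'I_N}| <= #|V|.
  have -> : #|V| = #|powerset [set: 'I_N]| by rewrite card_powerset cardsT card_ord.
  apply: subset_leq_card; apply/subsetP => A _; by rewrite powersetE subsetT.
have ons := inj_card_onto gi le.
move=> A B.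
have /codomP [x ->] := ons A; have /codomP [y ->] := ons B.
by rewrite !gK => ->.
Qed.

Definition xc r (i : 'I_N) (w : V) := [exists A, (Phi r A == w) && (i \in A)].

Lemma xc_Phi r i A : xc r i (Phi r A) = (i \in A).
Proof.
apply/existsP/idP => [[B /andP [/eqP /Phi_inj -> //]]|iA].
by exists A; rewrite eqxx.
Qed.

Lemma xc_sig r i j w : xc r i (sig j w) = xc r i w (+) (i == j).
Proof.
have [A <-] := Phi_surj r w.
by rewrite Phi_sig !xc_Phi !inE.
Qed.

Definition se (p q : V -> V -> bool) := exists S : {set V}, forall u v, adj u v ->
  q u v = (p u v (+) (u \in S)) (+) (v \in S).

Lemma se_trans p q t : se p q -> se q t -> se p t.
Proof.
move=> [S1 H1] [S2 H2]; exists [set w | (w \in S1) (+) (w \in S2)] => u v a.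
rewrite H2 // H1 // !inE.
by case: (p u v); case: (u \in S1); case: (u \in S2); case: (v \in S1); case: (v \in S2).
Qed.

Lemma se_push p q (g : V -> V) : se p q -> (forall u v, adj (g u) (g v) = adj u v) ->
  se (fun u v => p (g u) (g v)) (fun u v => q (g u) (g v)).
Proof.
move=> [S H] hg; exists [set w | g w \in S] => u v a.
by rewrite H ?hg // !inE.
Qed.

Lemma se_sig (i : 'I_N) : se parity (fun u v => parity (sig i u) (sig i v)).
Proof.
have [r _] : exists r : V, True.
  case: Had => _ [Hc _].
  case: (pickP (@predT V)) => [x _|H]; first by exists x.
  by move: Hcard; rewrite (eq_card0 H) => /esym /eqP; rewrite expn_eq0.
pose c w := boson w (+) xc r i w.
exists [set w | parity w (sig i w) (+) c w] => u v a.
rewrite !inE.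
have ev := sig_adj a.
have [ai ci] := sigP i u.
have [e|nij] := eqVneq i (color u v).
  rewrite ev -e sigK /c sig_bos xc_sig eqxx -!(par_sym ai).
  by case: (parity u (sig i u)); case: (boson u); case: (xc r i u).
set j := color u v in ev nij *.
rewrite ev.
case: Had => _ [_ [_ [_ [_ [_ Hodd]]]]].
have [aj cj] := sigP j u.
have [a2 c2] := sigP j (sig i u).
have [a3 c3] := sigP i (sig j u).
rewrite sigC in a3 c3.
have a3' : adj (sig j (sig i u)) (sig j u) by rewrite adj_sym.
have a4 : adj (sig j u) u by rewrite adj_sym.
have := Hodd _ _ _ _ ai a2 a3' a4.
rewrite ci c2 -(col_sym a3) c3 -(col_sym aj) cj => /(_ nij erefl erefl).
rewrite !oddD !oddb.
rewrite /c sig_bos !xc_sig (negbTE nij).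
rewrite (sigC i j u) (par_sym a3) (par_sym aj).
case: (parity u (sig i u)); case: (parity (sig i u) (sig j (sig i u)));
  case: (parity (sig j (sig i u)) (sig j u)); case: (parity (sig j u) u);
  case: (boson u); case: (xc r i u) => //.
Qed.

Lemma se_F s C : se parity (fun u v => parity (F s C u) (F s C v)).
Proof.
elim: s => [|k s IH] /=.
  by exists set0 => u v _; rewrite !inE !addbF.
case: (k \in C) => //.
apply: se_trans IH _.
exact: (se_push (g := F s C) (se_sig k) (F_adjE s C)).
Qed.

End Proof.

Theorem mainTheorem3 (N : nat) (V : finType) (boson : V -> bool) (adj : rel V)
    (color : V -> V -> 'I_N) (parity : V -> V -> bool) :
  is_adinkra boson adj color parity ->
  #|V| = 2 ^ N ->
  forall u v : V, boson u = boson v ->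
    exists s : {perm V}, is_automorphism boson adj color parity s /\ s u = v.
Proof.
move=> Had Hcard u v buv.
have [B eB] := Phi_surj Had u v.
exists (perm (F_inj Had (s:=enum 'I_N) (C:=B))); split; last by rewrite permE.
have bg : odd (count (fun k => k \in B) (enum 'I_N)) = false.
  move: buv; rewrite -eB /Phi (F_bos Had).
  by case: (boson u); case: (odd _).
split => [x y|x y a|x|]; rewrite ?permE.
- exact: (F_adjE Had).
- exact: (F_colE Had).
- by rewrite (F_bos Had) bg addbF.
have [S HS] := se_F Had Hcard (enum 'I_N) B.
by exists S => x y a; rewrite !permE HS.
Qed.
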